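(* Let $\lambda_0,\lambda_1,\lambda_\infty$ be integers with $0<\lambda_x<p^N$ for $x\in\{0,1,\infty\}$ and $\lambda_0+\lambda_1+\lambda_\infty$ odd and $<2p^N$. Let $\phi:\mathbb P\to\mathbb P$ be a finite, separable, tamely ramified morphism that has ramification index $\lambda_x$ at $[x]$ for $x\in\{0,1,\infty\}$ and is étale elsewhere. Then $\phi([0]),\phi([1]),\phi([\infty])$ are pairwise distinct.
   Context: $p$ is a prime, $N\ge1$, $k$ an algebraically closed field of characteristic $p$, $\mathbb P=\mathbb P^1_k$, and $[0],[1],[\infty]\in\mathbb P(k)$ the points with coordinates $0,1,\infty$. *)

(* Defs.v *)
From mathcomp Require Import all_boot all_order all_algebra.
Set Implicit Arguments. Unset Strict Implicit. Unset Printing Implicit Defensive.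
Import GRing.Theory.
Local Open Scope ring_scope.

(* Points of P^1_k: [Some a] is the affine point with coordinate a,
   [None] is the point [infinity]. *)
Definition P1 (k : fieldType) := option k.

(* A morphism phi : P^1 -> P^1 of degree d >= 1 is given by a pair of coprime
   polynomials (g, h), phi = [G : H] where G, H are the degree-d
   homogenizations of g and h, d = max(deg g, deg h). *)
Section Morphism.
Variables (k : fieldType) (g h : {poly k}).

Definition mdeg : nat := (maxn (size g) (size h)).-1.

(* the morphism is well defined and finite (nonconstant) *)
Definition is_finite_morphism : Prop := coprimep g h /\ (1 <= mdeg)%N.

(* separable: the rational function g/h has nonzero derivative *)
Definition is_separable : Prop := g^`() * h - g * h^`() != 0.

Definition phi_at (P : P1 k) : P1 k :=
  match P with
  | Some a => if h.[a] != 0 then Some (g.[a] / h.[a]) else None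
  | None => if (size h < size g)%N then None else Some (g`_mdeg / h`_mdeg)
  end.

(* the dehomogenized fibre form: its zeros (with multiplicity, including
   multiplicity mdeg - deg at infinity) form the divisor phi^*(Q) *)
Definition fibre_poly (Q : P1 k) : {poly k} :=
  match Q with
  | Some c => g - c *: h
  | None => h
  end.

(* ramification index of phi at P: multiplicity of P in phi^*(phi(P)),
   i.e. the valuation at P of the pull-back of a uniformizer at phi(P). *)
Definition ram_index (P : P1 k) : nat :=
  match P with
  | Some a => mup a (fibre_poly (phi_at P))
  | None => (mdeg.+1 - size (fibre_poly (phi_at P)))%N
  end.

Definition is_tame (p : nat) : Prop := forall P : P1 k, ~~ (p %| ram_index P)%N.

End Morphism.

(* Main.v *)
Require Import Defs.
From mathcomp Require Import all_boot all_order all_algebra ring zify.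
Import GRing.Theory.
Local Open Scope ring_scope.

Section Core.
Variable k : fieldType.
Implicit Types F G H V : {poly k}.

Lemma core F G H a e : F = G * ('X - a%:P) ^+ e -> ~~ root G a -> H.[a] != 0 ->
  e%:R != 0 :> k ->
  exists V, F^`() * H - F * H^`() = V * ('X - a%:P) ^+ e.-1 /\ ~~ root V a.
Proof.
move=> -> rG Ha.
case: e => [|e]; first by rewrite eqxx.
move=> He /=.
set X := 'X - a%:P.
exists ((G^`() * X + G *+ e.+1) * H - G * X * H^`()).
split.
  rewrite derivM deriv_exp derivXsubC mul1r /= exprS -/X.
  clearbody X; move: (X ^+ e) => Y.
  move: (G^`()) (H^`()) => G' H'.
  ring.
rewrite /root /X !hornerE subrr !(mulr0, mul0r, add0r, subr0) hornerMn.
by rewrite -mulr_natr mulf_neq0 // mulf_neq0.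
Qed.


Lemma size_A F : (size (('X * F^`() - F *+ (size F).-1)%R) <= (size F).-1)%N.
Proof.
  apply/leq_sizeP => j hj.
  rewrite coefB coefXM coefMn.
  case: j hj => [|j] hj /=.
    have -> : (size F).-1 = 0%N by lia.
    by rewrite mulr0n subr0.
  rewrite coef_deriv.
  have [hc|hc] : (j.+1 = (size F).-1 \/ (size F).-1 < j.+1)%N by lia.
    by rewrite -hc subrr.
  by rewrite nth_default ?mul0rn ?subr0 //; move: hc; case: (size F).
Qed.

Lemma degW F H : F != 0 -> H != 0 -> (size F)%:R != (size H)%:R :> k ->
  size (F^`() * H - F * H^`()) = (size F + size H).-2.
Proof.
move=> Fn Hn hne.
set n := (size F).-1; set m := (size H).-1.
set A := 'X * F^`() - F *+ n; set B := 'X * H^`() - H *+ m.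
have sA := size_A F; have sB := size_A H; rewrite -/n -/A in sA; rewrite -/m -/B in sB.
have hF : size F = n.+1 by rewrite /n; have := size_poly_gt0 F; rewrite Fn; lia.
have hH : size H = m.+1 by rewrite /m; have := size_poly_gt0 H; rewrite Hn; lia.
have id : 'X * (F^`() * H - F * H^`()) = (n%:R - m%:R : k) *: (F * H) + (A * H - F * B).
  rewrite scalerBl !scaler_nat /A /B; ring.
have cn : (n%:R - m%:R : k) != 0.
  rewrite subr_eq0; apply: contra hne; rewrite hF hH => /eqP e.
  by rewrite -addn1 -(addn1 m) !natrD e.
have sFH : size (F * H) = (size F + size H).-1 by rewrite size_mul.
have sl : (size (A * H - F * B)%R < size (F * H)%R)%N.
  apply: leq_ltn_trans (size_polyD _ _) _; rewrite size_polyN.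
  have h1 : (size (A * H)%R <= (size A + size H).-1)%N by apply: size_polyMleq.
  have h2 : (size (F * B)%R <= (size F + size B).-1)%N by apply: size_polyMleq.
  rewrite sFH gtn_max; apply/andP; split.
    apply: leq_ltn_trans h1 _; rewrite hF hH /= addnS /=.
    move: (size A) sA => z; clear; lia.
  apply: leq_ltn_trans h2 _; rewrite hF hH /= addnS /=.
  move: (size B) sB => z; clear; lia.
have : size ('X * (F^`() * H - F * H^`())) = (size F + size H).-1.
  by rewrite id size_polyDl size_scale // sFH.
case: (eqVneq (F^`() * H - F * H^`()) 0) => [->|Wn].
  by rewrite mulr0 size_poly0 hF hH addnS.
rewrite mulrC size_mulX // => e; rewrite hF hH addnS /= in e *.
by case: e => ->.
Qed.

End Core.

Section Main.
Variables (k : closedFieldType) (g h : {poly k}).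
Hypothesis hfin : is_finite_morphism g h.

Local Notation d := (mdeg g h).
Local Notation Wg := (g^`() * h - g * h^`()).
Local Notation fib := (fibre_poly g h).
Local Notation phi := (phi_at g h).

Lemma hmax : maxn (size g) (size h) = d.+1.
Proof. by case: hfin => _; rewrite /mdeg; case: (maxn _ _). Qed.

Lemma fib_nz Q : fib Q != 0.
Proof.
case: hfin => cop hd; have hm := hmax.
case: Q => [c|] /=; apply/eqP => e.
  have eg : g = c *: h by apply/eqP; rewrite -subr_eq0 e.
  have sh : size h = 1%N.
    case: (eqVneq c 0) => c0.
      move: cop; rewrite eg c0 scale0r coprime0p => /eqp_size; by rewrite size_poly1.
    by move: cop; rewrite eg coprimepZl // coprimepp => /eqP.
  have sg : (size g <= 1)%N by rewrite eg; apply: leq_trans (size_scale_leq _ _) _; rewrite sh.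
  move: hd hm; rewrite /mdeg sh => hd hm.
  by move: hd; rewrite (maxn_idPr sg).
move: cop; rewrite e coprimep0 => /eqp_size; rewrite size_poly1 => sg.
by move: hd; rewrite /mdeg sg e size_poly0.
Qed.


Lemma fib_size Q : (size (fib Q) <= d.+1)%N.
Proof.
rewrite -hmax; case: Q => [c|] /=; last exact: leq_maxr.
apply: leq_trans (size_polyD _ _) _; rewrite size_polyN geq_max leq_maxl /=.
exact: leq_trans (size_scale_leq _ _) (leq_maxr _ _).
Qed.

Lemma fib_size_eq R : R <> phi None -> size (fib R) = d.+1.
Proof.
move=> hR; apply/eqP; rewrite eqn_leq fib_size /=.
have hm := hmax.
case: (leqP (size (fib R)) d) => // hs; exfalso.
move/leq_sizeP: hs => /(_ d (leqnn d)) hc.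
move: hR; rewrite /phi_at.
case: R hc => [c|] /= hc; case: ltnP => hgh.
- have sg : size g = d.+1 by move: hm; rewrite (maxn_idPl (ltnW hgh)).
  have h0 : h`_d = 0 by apply: nth_default; move: hgh; rewrite sg.
  move: hc; rewrite coefB coefZ h0 mulr0 subr0 => hc.
  have : lead_coef g == 0 by rewrite lead_coefE sg hc.
  by rewrite lead_coef_eq0 -size_poly_eq0 sg.
- have sh : size h = d.+1 by move: hm; rewrite (maxn_idPr hgh).
  have hd0 : h`_d != 0.
    have : lead_coef h != 0 by rewrite lead_coef_eq0 -size_poly_eq0 sh.
    by rewrite lead_coefE sh.
  move=> hne; apply: hne; congr Some.
  move: hc; rewrite coefB coefZ => /eqP; rewrite subr_eq0 => /eqP ->.
  by rewrite mulfK.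
- by [].
- have sh : size h = d.+1 by move: hm; rewrite (maxn_idPr hgh).
  have : lead_coef h != 0 by rewrite lead_coef_eq0 -size_poly_eq0 sh.
  by rewrite lead_coefE sh /= hc eqxx.
Qed.

Lemma pw a : (ram_index g h (Some a))%:R != 0 :> k ->
  ('X - a%:P) ^+ (ram_index g h (Some a)).-1 %| Wg /\
  ~~ (('X - a%:P) ^+ (ram_index g h (Some a)) %| Wg).
Proof.
move=> He.
have [H [Ha HW]] : exists H, H.[a] != 0 /\
   (let F := fib (phi (Some a)) in F^`() * H - F * H^`() = Wg \/
                                  F^`() * H - F * H^`() = - Wg).
  rewrite /=; case: ifP => ha.
    exists h; split => //; left; rewrite /= derivB derivZ -!mul_polyC.
    by move: (g^`()) (h^`()) => g' h'; ring.
  have h0 : root h a by move/negbFE: ha.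
  exists g; split.
    by apply: coprimep_root h0; rewrite coprimep_sym; case: hfin.
  by right => /=; ring.
move: He HW; rewrite /ram_index.
set F := fib (phi (Some a)) => He HW.
have Fnz : F != 0 by apply: fib_nz.
case: (multiplicity_XsubC F a) => m [q]; rewrite Fnz /= => rq EF.
have me : mup a F = m by rewrite EF mupMr // mup_XsubCX eqxx.
rewrite me in He *.
have [V [EV rV]] := @core _ F q H a m EF rq Ha He.
have m0 : (0 < m)%N by case: m He {EF me EV} => //; rewrite eqxx.
have eW : Wg = V * ('X - a%:P) ^+ m.-1 \/ Wg = - (V * ('X - a%:P) ^+ m.-1).
  by case: HW => e; [left; rewrite -e EV | right; rewrite -EV e opprK].
split.
  by case: eW => ->; rewrite ?dvdpNr dvdp_mull.
have key : ~~ (('X - a%:P) ^+ m %| V * ('X - a%:P) ^+ m.-1).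
  rewrite -(prednK m0) exprS dvdp_mul2r ?expf_neq0 ?polyXsubC_eq0 //.
  by rewrite dvdp_XsubCl.
by case: eW => ->; rewrite ?dvdpNr.
Qed.

Lemma Wrel Q R : Q <> R -> exists c : k, c != 0 /\
  (fib Q)^`() * fib R - fib Q * (fib R)^`() = c *: Wg.
Proof.
case: Q => [c|]; case: R => [c'|] //= hne.
- exists (c - c'); split.
    by rewrite subr_eq0; apply/eqP => e; apply: hne; rewrite e.
  rewrite !derivB !derivZ -!mul_polyC.
  rewrite polyCB; move: (g^`()) (h^`()) => g' h'; ring.
- exists 1; split; first exact: oner_neq0.
  rewrite scale1r derivB derivZ -!mul_polyC.
  move: (g^`()) (h^`()) => g' h'; ring.
- exists (-1); split; first by rewrite oppr_eq0 oner_neq0.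
  rewrite derivB derivZ scaleN1r -!mul_polyC.
  move: (g^`()) (h^`()) => g' h'; ring.
Qed.

Lemma arith1 (l0 l1 a b : nat) : (0 < l0)%N -> (0 < l1)%N ->
  (l0.+1 + l1.+1 - 1 <= a + b - 1)%N ->
  (0 + (l0 - 1 + (l1 - 1)).+1)%N = (a + b - 1 - 1)%N -> False.
Proof. lia. Qed.

Lemma ramS a : ram_index g h (Some a) = mup a (fib (phi (Some a))).
Proof. by []. Qed.

Lemma no_collision (p : nat) (hchar : p \in [pchar k]) (htame : is_tame g h p)
  (hsep : is_separable g h)
  (hetale : forall a : k, a != 0 -> a != 1 -> ram_index g h (Some a) = 1%N)
  R : R <> phi None -> (phi (Some 0) = phi None \/ phi (Some 0) = R) ->
  (phi (Some 1) = phi None \/ phi (Some 1) = R) -> False.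
Proof.
move=> hR h0 h1.
have rk P : (ram_index g h P)%:R != 0 :> k by rewrite -(dvdn_pcharf hchar); exact: htame.
set Q := phi None in hR h0 h1.
set F := fib Q; set H := fib R.
have Fn : F != 0 by apply: fib_nz.
have Hn : H != 0 by apply: fib_nz.
have sH : size H = d.+1 by apply: fib_size_eq.
set linf := ram_index g h None.
have eL : linf = (d.+1 - size F)%N by [].
have sF1 : (0 < size F)%N by rewrite size_poly_gt0.
have sFd := fib_size Q; rewrite -/F in sFd.
have l0 : (0 < linf)%N.
  by case: (posnP linf) => // e; have := rk None; rewrite -/linf e eqxx.
have eH : size H = (size F + linf)%N by rewrite sH eL; lia.
have hne : (size F)%:R != (size H)%:R :> k.
  rewrite eH natrD -subr_eq0 opprD addrA subrr add0r oppr_eq0; exact: rk.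
have [c [cn Ec]] := @Wrel Q R (nesym hR); rewrite -/F -/H in Ec.
have sW : size Wg = (size F + size H).-2.
  by rewrite -(size_scale _ cn) -Ec degW.
set l0' := ram_index g h (Some 0); set l1' := ram_index g h (Some 1).
have X01 : coprimep ('X - 0%:P : {poly k}) ('X - 1%:P).
  by apply: coprimep_XsubC2; rewrite subr0 oner_eq0.
have cop m n : coprimep ((('X - 0%:P : {poly k})) ^+ m) (('X - 1%:P) ^+ n).
  by apply: coprimep_expl; apply: coprimep_expr.
have d0 : ('X - 0%:P) ^+ l0' %| F * H.
  rewrite /l0' ramS; case: h0 => ->; [apply: dvdp_mulr | apply: dvdp_mull];
  by rewrite -mup_geq ?fib_nz.
have d1 : ('X - 1%:P) ^+ l1' %| F * H.
  rewrite /l1' ramS; case: h1 => ->; [apply: dvdp_mulr | apply: dvdp_mull];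
  by rewrite -mup_geq ?fib_nz.
have d01 : ('X - 0%:P) ^+ l0' * ('X - 1%:P) ^+ l1' %| F * H.
  by rewrite Gauss_dvdp ?cop ?d0 ?d1.
have sFH := dvdp_leq (mulf_neq0 Fn Hn) d01.
rewrite size_mul ?expf_neq0 ?polyXsubC_eq0 // !size_exp_XsubC size_mul // in sFH.
have p0 : (0 < l0')%N.
  by case: (posnP l0') => // e; have := rk (Some 0); rewrite -/l0' e eqxx.
have p1 : (0 < l1')%N.
  by case: (posnP l1') => // e; have := rk (Some 1); rewrite -/l1' e eqxx.
have [pw0 npw0] := @pw 0 (rk (Some 0)); rewrite -/l0' in pw0 npw0.
have [pw1 npw1] := @pw 1 (rk (Some 1)); rewrite -/l1' in pw1 npw1.
set D := ('X - 0%:P : {poly k}) ^+ l0'.-1 * ('X - 1%:P) ^+ l1'.-1.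
have dD : D %| Wg by rewrite Gauss_dvdp ?cop ?pw0 ?pw1.
have Dn : D != 0 by rewrite mulf_neq0 // expf_neq0 // polyXsubC_eq0.
have sD : size D = (l0'.-1 + l1'.-1).+1.
  by rewrite size_mul ?expf_neq0 ?polyXsubC_eq0 // !size_exp_XsubC addSn addnS.
set U := Wg %/ D.
have eU : Wg = U * D by rewrite divpK.
have Un : U != 0 by apply: contraNneq hsep => e; rewrite eU e mul0r.
have sU : size U != 1%N.
  apply/eqP => e; move: sW; rewrite eU size_mul // e sD /=.
  move: sFH; rewrite -/F -/H.
  move: (size F) (size H) p0 p1 => a b; clearbody l0' l1'; rewrite -!subn1.
  exact: arith1.
have [a ra] := closed_rootP U sU.
have dU : ('X - a%:P) %| U by rewrite dvdp_XsubCl.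
case: (eqVneq a 0) => [ea|a0].
  rewrite ea in dU; move/negP: npw0; apply; rewrite -(prednK p0) exprS eU.
  by apply: dvdp_mul => //; apply: dvdp_mulr.
case: (eqVneq a 1) => [ea|a1].
  rewrite ea in dU; move/negP: npw1; apply; rewrite -(prednK p1) exprS eU.
  by apply: dvdp_mul => //; apply: dvdp_mull.
have e1 := hetale a a0 a1.
have [_ /negP] := @pw a (rk (Some a)); apply; rewrite e1 expr1 eU.
exact: dvdp_mulr.
Qed.
End Main.

Theorem mainTheorem16 (p N : nat) (k : closedFieldType)
  (hp : prime p) (hchar : p \in [pchar k]) (hN : (1 <= N)%N)
  (l0 l1 linf : nat)
  (hl0 : (0 < l0 < p ^ N)%N) (hl1 : (0 < l1 < p ^ N)%N)
  (hlinf : (0 < linf < p ^ N)%N)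
  (hodd : odd (l0 + l1 + linf)) (hsum : (l0 + l1 + linf < 2 * p ^ N)%N)
  (g h : {poly k})
  (hfin : is_finite_morphism g h) (hsep : is_separable g h)
  (htame : is_tame g h p)
  (hr0 : ram_index g h (Some 0) = l0)
  (hr1 : ram_index g h (Some 1) = l1)
  (hrinf : ram_index g h None = linf)
  (hetale : forall a : k, a != 0 -> a != 1 -> ram_index g h (Some a) = 1%N) :
  [/\ phi_at g h (Some 0) <> phi_at g h (Some 1),
      phi_at g h (Some 0) <> phi_at g h None
    & phi_at g h (Some 1) <> phi_at g h None].
Proof.
have [R0 hR0] : exists R0 : P1 k, R0 <> phi_at g h None.
  by case: (phi_at g h None) => [c|]; [exists None | exists (Some 0)].
have NC := @no_collision k g h hfin p hchar htame hsep hetale.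
set Q := phi_at g h None in NC hR0 *.
split=> E.
- case: (eqVneq (phi_at g h (Some 0)) Q) => [e|/eqP ne].
    by apply: (NC R0 hR0 (or_introl e)); left; rewrite -E.
  by apply: (NC _ ne (or_intror erefl)); right.
- case: (eqVneq (phi_at g h (Some 1)) Q) => [e|/eqP ne].
    by apply: (NC R0 hR0 (or_introl E) (or_introl e)).
  by apply: (NC _ ne (or_introl E) (or_intror erefl)).
- case: (eqVneq (phi_at g h (Some 0)) Q) => [e|/eqP ne].
    by apply: (NC R0 hR0 (or_introl e) (or_introl E)).
  by apply: (NC _ ne (or_intror erefl) (or_introl E)).
Qed.
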